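(* Let $f:\mathbb{R}^n\to\mathbb{R}$ be a differentiable cost function and suppose the $G^t$ are unbiased estimators of $\nabla f$. Let $\mathcal{E}^t$ denote the event that $\|G^t(x^t)\|_\infty\le\eta$. Then the iterates of SMGD satisfy $$\mathbb{E}\left[\sum_{i\in\Omega^t}\mathrm{sgn}\big(G^t(x^t)_i\big)\frac{\partial f}{\partial x_i}(x^t)\,\middle|\,x^t,\mathcal{E}^t\right]=\frac{1}{\eta}\|\nabla f(x^t)\|_2^2,$$ where $\Omega^t=\{i\in\{1,\dots,n\}:\Delta^t_i\neq0\}$.
   Context: SMGD: Let $\alpha>0$, $\eta>0$, $x^0\in\alpha\mathbb{Z}^n$. At step $t$ a random vector $G^t(x^t)\in\mathbb{R}^n$ is drawn; then for each coordinate $i$, conditionally on $G^t$ and $x^t$, $\Delta^t_i\in\{0,1\}$ is Bernoulli with $\mathbb{P}[\Delta^t_i=1\mid G^t,x^t]=\min(|G^t(x^t)_i|/\eta,1)$, and $x^{t+1}_i=x^t_i-\alpha\,\mathrm{sgn}(G^t(x^t)_i)\Delta^t_i$. A random function $G$ is an unbiased estimator of $\nabla f$ if $\mathbb{E}[G(x)]=\nabla f(x)$ for all $x$. Standing assumptions: $\{G^t\}$ are i.i.d. copies of an unbiased estimator $G$, each $G^t$ is independent of $x^t$, and $\mathbb{E}[G^t(x^t)\mid x^t,\mathcal{E}^t]=\nabla f(x^t)$. *)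

(* Defs.v *)
From HB Require Import structures.
From mathcomp Require Import all_boot all_order all_algebra.
From mathcomp Require Import all_classical all_reals all_analysis.
Set Implicit Arguments. Unset Strict Implicit. Unset Printing Implicit Defensive.
Import Order.TTheory GRing.Theory Num.Theory.
Import numFieldNormedType.Exports.
Local Open Scope classical_set_scope.
Local Open Scope ring_scope.

(* Vectors of R^n are row vectors 'rV[R]_n; coordinate i of v is v 0 i. *)

Definition partial (R : realType) (n : nat) (i : 'I_n) (f : 'rV[R]_n -> R)
  (x : 'rV[R]_n) : R := derive f x (delta_mx 0 i).

Definition sigma_pair (R : realType) (n : nat) (T : Type)
  (X Y : T -> 'rV[R]_n) : set (set T) :=
  <<s [set B | exists (j : 'I_n) (A : set R), measurable A /\
               (B = (fun w => X w 0 j) @^-1` A \/ B = (fun w => Y w 0 j) @^-1` A)] >>.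

Definition cond_expect (R : realType) (d : measure_display)
  (T : measurableType d) (P : probability T R) (A : set T) (X : T -> R) : R :=
  fine (\int[P]_(w in A) (X w)%:E) / fine (P A).

(* The event {x^t = x} /\ E^t, where E^t = {||G^t(x^t)||_oo <= eta};
   on 'rV[R]_n the library norm `|v| is the sup norm (mx_norm). *)
Definition cond_event (R : realType) (n : nat) (T : Type)
  (xt Gt : T -> 'rV[R]_n) (eta : R) (x : 'rV[R]_n) : set T :=
  [set w | xt w = x] `&` [set w | `|Gt w| <= eta].

(* Main.v *)
Require Import Defs.
From HB Require Import structures.
From mathcomp Require Import all_boot all_order all_algebra.
From mathcomp Require Import all_classical all_reals all_analysis.
From mathcomp Require Import ring lra.
Import Order.TTheory GRing.Theory Num.Theory.
Import numFieldNormedType.Exports.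
Local Open Scope classical_set_scope.
Local Open Scope ring_scope.
Lemma mkind (R : realType) (d : measure_display) (T : measurableType d)
  (P : probability T R) (D S : set T) (h : T -> R) :
  (\int[P]_(x in D `&` S) (h x)%:E = \int[P]_(x in D) (\1_S x * h x)%:E)%E.
Proof.
rewrite integral_mkcondr; apply: eq_integral => w _; rewrite /patch indicE.
by case: (w \in S); rewrite ?mul1r ?mul0r.
Qed.

Lemma bnd_int (R : realType) (d : measure_display) (T : measurableType d)
  (P : probability T R) (D : set T) (h : T -> R) (c : R) :
  measurable D -> measurable_fun D h -> (forall w, D w -> `|h w| <= c) ->
  P.-integrable D (EFin \o h).
Proof.
move=> mD mh hc.
apply: (le_integrable mD _ _ (finite_measure_integrable_cst P c mD)).
  by apply/measurable_realfun.measurable_EFinP.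
move=> w Dw /=; rewrite lee_fin; apply: (le_trans (hc w Dw)).
exact: ler_norm.
Qed.
Arguments bnd_int {R d T P D h c}.

Lemma memb (T : Type) (b : T -> bool) w : (w \in [set w | b w]) = b w.
Proof. by apply/idP/idP; rewrite in_setE. Qed.
Section S.
Variables (R : realType) (n : nat) (d : measure_display) (T : measurableType d).
Variables (X Y : T -> 'rV[R]_n).
Let Gen := [set B | exists (j : 'I_n) (A : set R), measurable A /\
               (B = (fun w => X w 0 j) @^-1` A \/ B = (fun w => Y w 0 j) @^-1` A)].

Lemma sig_meas : (forall j, measurable_fun setT (fun w => X w 0 j)) ->
  (forall j, measurable_fun setT (fun w => Y w 0 j)) ->
  forall B, sigma_pair X Y B -> measurable B.
Proof.
move=> mX mY B; apply: smallest_sub B; first exact: sigma_algebra_measurable.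
move=> _ [j [A [mA [->|->]]]].
  by have := mX j measurableT A mA; rewrite setTI.
by have := mY j measurableT A mA; rewrite setTI.
Qed.

Lemma sig_genX j (A : set R) : measurable A -> sigma_pair X Y ((fun w => X w 0 j) @^-1` A).
Proof. by move=> mA; apply: sub_gen_smallest; exists j, A; split => //; left. Qed.

Lemma sig_genY j (A : set R) : measurable A -> sigma_pair X Y ((fun w => Y w 0 j) @^-1` A).
Proof. by move=> mA; apply: sub_gen_smallest; exists j, A; split => //; right. Qed.

Lemma sigI B C : sigma_pair X Y B -> sigma_pair X Y C -> sigma_pair X Y (B `&` C).
Proof. exact: (@measurableI _ (g_sigma_algebraType Gen) B C). Qed.

Lemma sig_bigcap (F : 'I_n -> set T) : (forall j, sigma_pair X Y (F j)) ->
  sigma_pair X Y (\bigcap_(j in [set: 'I_n]) F j).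
Proof.
move=> hF.
exact: (@fin_bigcap_measurable _ (g_sigma_algebraType Gen) _ setT F finite_finset (fun j _ => hF j)).
Qed.
End S.
Arguments sig_meas {R n d T X Y}.
Arguments sig_genX {R n d T X Y}.
Arguments sig_genY {R n d T X Y}.
Arguments sigI {R n d T X Y}.
Arguments sig_bigcap {R n d T X Y}.
Lemma normle (R : realType) (n : nat) (v : 'rV[R]_n) (e : R) : 0 <= e ->
  (`|v| <= e) <-> (forall j, `|v 0 j| <= e).
Proof.
move=> e0; change (`|v|) with (mx_norm v); rewrite mx_normrE; split.
  move=> h j; apply: le_trans h.
  exact: (le_bigmax _ (fun ij : 'I_1 * 'I_n => `|v ij.1 ij.2|) (0, j)).
move=> h; apply/bigmax_leP; split => // [[i j]] _ /=.
by rewrite (ord1 i).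
Qed.
Arguments normle {R n v e}.
Theorem lemma4p5 (R : realType) (n : nat) (d : measure_display)
  (T : measurableType d) (P : probability T R)
  (alpha eta : R) (f : 'rV[R]_n -> R)
  (G : T -> 'rV[R]_n -> 'rV[R]_n) (xt : T -> 'rV[R]_n) (Delta : T -> 'I_n -> bool) :
  0 < alpha -> 0 < eta ->
  (forall x : 'rV[R]_n, differentiable f x) ->
  (* G is an unbiased estimator of grad f *)
  (forall (x : 'rV[R]_n) (j : 'I_n),
     P.-integrable setT (fun w => (G w x 0 j)%:E) /\
     (\int[P]_(w in setT) (G w x 0 j)%:E = (partial j f x)%:E)%E) ->
  (* x^t is a random vector with values in alpha Z^n *)
  (forall j : 'I_n, measurable_fun setT (fun w => xt w 0 j)) ->
  (forall (w : T) (j : 'I_n), exists k : int, xt w 0 j = k%:~R * alpha) ->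
  (forall j : 'I_n, measurable_fun setT (fun w => G w (xt w) 0 j)) ->
  (* Delta^t_i is Bernoulli with P[Delta_i = 1 | G^t(x^t), x^t] = min(|G^t(x^t)_i|/eta, 1) *)
  (forall i : 'I_n, measurable [set w | Delta w i]) ->
  (forall (i : 'I_n) (B : set T),
     sigma_pair (fun w => G w (xt w)) xt B ->
     (P ([set w | Delta w i] `&` B) =
      \int[P]_(w in B) (Order.min (`|G w (xt w) 0 i| / eta) 1)%:E)%E) ->
  (* standing assumption: E[G^t(x^t) | x^t, E^t] = grad f(x^t) *)
  (forall x : 'rV[R]_n,
     (0 < P (cond_event xt (fun w => G w (xt w)) eta x))%E ->
     forall j : 'I_n,
       cond_expect P (cond_event xt (fun w => G w (xt w)) eta x)
         (fun w => G w (xt w) 0 j) = partial j f x) ->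
  (* conclusion *)
  forall x : 'rV[R]_n,
    (0 < P (cond_event xt (fun w => G w (xt w)) eta x))%E ->
    cond_expect P (cond_event xt (fun w => G w (xt w)) eta x)
      (fun w => \sum_(i < n | Delta w i)
                  Num.sg (G w (xt w) 0 i) * partial i f (xt w))
    = (\sum_(i < n) (partial i f x) ^+ 2) / eta.
Proof.
move=> hal heta hdiff hunb mxt hint mG mDel hD hcond x PA.
set Gx := fun w => G w (xt w).
set A := cond_event xt Gx eta x.
set g := fun w (i : 'I_n) => (Gx w 0 i : R).
set c := fun i => partial i f x.
have sigM := sig_meas mG mxt.
have sigA : sigma_pair Gx xt A.
  have -> : A = \bigcap_(j in [set: 'I_n])
     ((fun w => xt w 0 j) @^-1` [set x 0 j] `&` (fun w => Gx w 0 j) @^-1` `[- eta, eta]).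
    apply/seteqP; split => w.
      move=> [/= xe hn] j _; split => /=; first by rewrite xe.
      by rewrite /= in_itv /= -ler_norml; move/(normle (ltW heta)): hn; apply.
    move=> hw; split.
      by apply/matrixP => i j; rewrite (ord1 i); have [/= -> _] := hw j I.
    rewrite /=; apply/(normle (ltW heta)) => j.
    by have [_ /=] := hw j I; rewrite in_itv /= -ler_norml.
  apply: sig_bigcap => j; apply: sigI; [apply: sig_genY; exact: measurable_set1|apply: sig_genX; exact: measurable_itv].
have mA : measurable A by exact: sigM.
have Ax : forall w, A w -> xt w = x by move=> w [].
have Ab : forall w i, A w -> `|g w i| <= eta.
  by move=> w i [_ hn]; move/(normle (ltW heta)): hn; apply.
set Pos := fun i => [set w | 0 < g w i].
set Neg := fun i => [set w | g w i < 0].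
have sigPos : forall i, sigma_pair Gx xt (Pos i).
  move=> i; have -> : Pos i = (fun w => Gx w 0 i) @^-1` `]0, +oo[.
    by apply/seteqP; split => w /=; rewrite in_itv /= andbT.
  by apply: sig_genX; exact: measurable_itv.
have sigNeg : forall i, sigma_pair Gx xt (Neg i).
  move=> i; have -> : Neg i = (fun w => Gx w 0 i) @^-1` `]-oo, 0[.
    by apply/seteqP; split => w /=; rewrite in_itv /=.
  by apply: sig_genX; exact: measurable_itv.
set DP := fun i => [set w | Delta w i] `&` Pos i.
set DN := fun i => [set w | Delta w i] `&` Neg i.
have mDP : forall i, measurable (DP i).
  by move=> i; apply: measurableI => //; exact: sigM.
have mDN : forall i, measurable (DN i).
  by move=> i; apply: measurableI => //; exact: sigM.

have pAf : P A \is a fin_num by exact: fin_num_measure.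
set pA := fine (P A).
have pA0 : 0 < pA by rewrite -lte_fin /pA fineK.
have mg : forall i, measurable_fun A (fun w => g w i).
  by move=> i; apply: (measurable_funS measurableT (@subsetT _ A) (mG i)).
have gint : forall i, P.-integrable A (fun w => (g w i)%:E).
  by move=> i; apply: (bnd_int (c := eta)) => // w Aw; exact: Ab.
have hI : forall i, (\int[P]_(w in A) (g w i)%:E = (c i * pA)%:E)%E.
  move=> i; have := hcond x PA i; rewrite /cond_expect -/A -/pA => hc.
  rewrite -(fineK (integrable_fin_num mA (gint i))); congr EFin.
  rewrite /c -hc -mulrA mulVf ?mulr1 //; exact: lt0r_neq0.
have indb : forall (S : set T) w (y : R), `|\1_S w * y| <= `|y|.
  by move=> S w y; rewrite indicE; case: (w \in S); rewrite ?mul1r ?mul0r ?normr0.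
have indm : forall (S : set T), measurable S -> measurable_fun A (\1_S : T -> R).
  by move=> S mS; apply: measurable_realfun.measurable_indic.
have indint : forall (S : set T), measurable S -> P.-integrable A (fun w => (\1_S w)%:E).
  move=> S mS; apply: (bnd_int (c := 1)) => //.
  by move=> w _; rewrite indicE; case: (w \in S); rewrite ?normr0 ?normr1.
have hb : forall i w, A w -> `|g w i / eta| <= 1.
  by move=> i w Aw; rewrite normrM normfV (gtr0_norm heta) ler_pdivrMr // mul1r; exact: Ab.
have key : forall i, (\int[P]_(w in A) (\1_(DP i) w - \1_(DN i) w)%:E
                     = \int[P]_(w in A) (g w i / eta)%:E)%E.
  move=> i.
  transitivity (\int[P]_(w in A) ((\1_(DP i) w)%:E - (\1_(DN i) w)%:E))%E.
    by apply: eq_integral => w _; rewrite EFinB.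
  rewrite integralB_EFin //; try exact: indint.
  rewrite !integral_indic // /DP /DN -!setIA.
  transitivity ((\int[P]_(w in Pos i `&` A) (Order.min (`|G w (xt w) 0 i| / eta) 1)%:E)
     - (\int[P]_(w in Neg i `&` A) (Order.min (`|G w (xt w) 0 i| / eta) 1)%:E))%E.
    congr (_ - _)%E.
      exact: (hD i _ (sigI _ _ (sigPos i) sigA)).
    exact: (hD i _ (sigI _ _ (sigNeg i) sigA)).
  rewrite setIC (mkind _ _ _ P A (Pos i)) setIC (mkind _ _ _ P A (Neg i)).
  transitivity ((\int[P]_(w in A) (\1_(Pos i) w * (g w i / eta))%:E)
     - (\int[P]_(w in A) (\1_(Neg i) w * (- g w i / eta))%:E))%E.
    congr (_ - _)%E; apply: eq_integral => w /set_mem Aw; rewrite !indicE.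
      case: (boolP (w \in Pos i)); last by move=> _; rewrite !mul0r.
      rewrite memb => gp; rewrite !mul1r; congr EFin.
      rewrite gtr0_norm //; apply: min_l.
      by rewrite ler_pdivrMr // mul1r; apply: le_trans (Ab w i Aw); exact: ler_norm.
    case: (boolP (w \in Neg i)); last by move=> _; rewrite !mul0r.
    rewrite memb => gn; rewrite !mul1r; congr EFin.
    rewrite ltr0_norm //; apply: min_l.
    by rewrite ler_pdivrMr // mul1r; apply: le_trans (Ab w i Aw); rewrite -[X in _ <= X]normrN; exact: ler_norm.
  have mS : forall (S : set T) (h : T -> R), measurable S -> measurable_fun A h ->
     measurable_fun A (fun w => \1_S w * h w).
    by move=> S h mS' mh; apply: measurable_realfun.measurable_funM => //; exact: indm.
  have mgd : measurable_fun A (fun w => g w i / eta).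
    by apply: measurable_realfun.measurable_funM => //; exact: measurable_cst.
  have mgn : measurable_fun A (fun w => - g w i / eta).
    apply: measurable_realfun.measurable_funM => //.
    by apply: measurableT_comp => //; exact: mg.
  rewrite -integralB_EFin //; first last.
  - apply: (bnd_int (c := 1)) => //; first by apply: mS => //; exact: sigM.
    move=> w Aw; apply: le_trans (indb _ _ _) _.
    by rewrite mulNr normrN; exact: hb.
  - apply: (bnd_int (c := 1)) => //; first by apply: mS => //; exact: sigM.
    by move=> w Aw; apply: le_trans (indb _ _ _) _; exact: hb.
  apply: eq_integral => w /set_mem Aw; congr EFin; rewrite !indicE /Pos /Neg !memb.
  have [gp|gn|g0] := ltrgt0P (g w i).
  - by rewrite mul1r mul0r subr0.
  - by rewrite mul1r mul0r sub0r mulNr opprK.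
  - by rewrite g0 !mul0r subr0.
have step3 : forall i, (\int[P]_(w in A) ((\1_(DP i) w - \1_(DN i) w) * c i)%:E
                     = (c i * pA / eta * c i)%:E)%E.
  move=> i.
  under eq_integral do rewrite EFinM.
  rewrite integralZr //; last first.
    apply: (bnd_int (c := 1)) => //; first exact: measurable_realfun.measurable_funB.
    by move=> w _; rewrite !indicE; case: (w \in DP i); case: (w \in DN i);
      rewrite ?subrr ?subr0 ?sub0r ?normrN ?normr0 ?normr1.
  rewrite key.
  under eq_integral do rewrite EFinM.
  rewrite integralZr // hI -!EFinM.
  by congr EFin; rewrite mulrA.
have step1 : (\int[P]_(w in A) (\sum_(i < n | Delta w i)
                  Num.sg (G w (xt w) 0 i) * partial i f (xt w))%:E
    = \int[P]_(w in A) (\sum_(i < n) ((\1_(DP i) w - \1_(DN i) w) * c i)%:E))%E.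
  apply: eq_integral => w /set_mem Aw.
  rewrite sumEFin; congr EFin; rewrite big_mkcond /=; apply: eq_bigr => i _.
  rewrite !indicE /DP /DN /Pos /Neg !in_setI !memb /g /Gx /c (Ax w Aw).
  case: (Delta w i) => /=; last by rewrite subrr mul0r.
  have [gp|gn|g0] := ltrgt0P (G w x 0 i) => /=.
  - by rewrite gtr0_sg // subr0 mul1r.
  - by rewrite ltr0_sg // sub0r.
  - by rewrite g0 sgr0 subrr !mul0r.
rewrite /cond_expect -/A -/pA step1 integral_sum //; last first.
  move=> i; apply: (bnd_int (c := `|c i|)) => //.
    by apply: measurable_realfun.measurable_funM; [exact: measurable_realfun.measurable_funB|exact: measurable_cst].
  move=> w _; rewrite normrM ler_piMl //; rewrite !indicE.
  by case: (w \in DP i); case: (w \in DN i);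
      rewrite ?subrr ?subr0 ?sub0r ?normrN ?normr0 ?normr1.
under eq_bigr do rewrite step3.
rewrite sumEFin /= -/c.
rewrite (eq_bigr (fun i => c i ^+ 2 * (pA / eta))); last by move=> i _; ring.
rewrite -mulr_suml; field.
by rewrite (lt0r_neq0 pA0) (lt0r_neq0 heta).
Qed.
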